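(* Let $A/B$ and $A'/B'$ be ring extensions, and suppose there are Morita modules ${}_AM_{A'}$ and ${}_BN_{B'}$ with ${}_AA\otimes_BN_{B'}\cong {}_AM_{B'}$. Let $N^{*}=\mathrm{Hom}^r({}_BN,{}_BB)$, choose $g_k,f_j\in N^{*}$ and $n_k,m_j\in N$ (finitely many) with $\sum_k n_k^{g_k}=1$ and $\sum_j n^{f_j}m_j=n$ for all $n\in N$, and identify $A'$ and $B'$ with the rings $N^{*}\otimes_BA\otimes_BN$ and $N^{*}\otimes_BB\otimes_BN$ as described in the context. Define $\psi:A\otimes_BA\to A'\otimes_{B'}A'$ by $\psi(x\otimes y)=\sum_{j,k}(f_j\otimes x\otimes n_k)\otimes(g_k\otimes y\otimes m_j)$. Then $\psi$ restricts to an additive group isomorphism $(A\otimes_BA)^B\cong (A'\otimes_{B'}A')^{B'}$.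
   Context: All rings have identity, subrings contain the identity, and modules are unital. A ring extension $A/B$ means $B$ is a subring of $A$. For an $R$-$R$-module $S$ and a subring (or subset) $X$ of $R$, $S^X=\{s\in S\mid xs=sx \text{ for all } x\in X\}$. For modules ${}_AM$, ${}_AN$, $\mathrm{Hom}^r({}_AM,{}_AN)$ denotes left $A$-homomorphisms written on the right of their arguments (the image of $u$ under $\rho$ is written $u^\rho$), and $\mathrm{End}^r({}_AM)=\mathrm{Hom}^r({}_AM,{}_AM)$. For modules ${}_AX_{A'}$, ${}_AY_{A'}$, write $X\mid Y$ if $X$ is isomorphic to a direct summand of a finite direct sum of copies of $Y$, and $X\sim Y$ if $X\mid Y$ and $Y\mid X$. A bimodule ${}_AM_{A'}$ is a Morita module if ${}_AM\sim{}_AA$ and $\mathrm{End}^r({}_AM)=A'$ (with $A'$ acting on the right). $N^{*}$ is a $B'$-$B$-bimodule via $u^{(b'\rho b)}=(ub')^\rho b$. Identification: the map $N^{*}\otimes_BA\otimes_BN\to \mathrm{End}^r({}_AA\otimes_BN)\cong A'$, $\rho\otimes x\otimes u\mapsto[y\otimes v\mapsto y\,v^\rho x\otimes u]$, is a ring isomorphism when $N^{*}\otimes_BA\otimes_BN$ carries the multiplication $(\rho\otimes x\otimes u)(\sigma\otimes y\otimes v)=\rho\otimes x\,u^\sigma y\otimes v$ (identity $\sum_j f_j\otimes1\otimes m_j$); it carries $N^{*}\otimes_BB\otimes_BN$ onto $B'$. Through this identification $A'$ and $B'$ are regarded as $N^{*}\otimes_BA\otimes_BN$ and $N^{*}\otimes_BB\otimes_BN$.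 *)

(* Defs.v *)
From HB Require Import structures.
From mathcomp Require Import all_boot all_order all_algebra.
Set Implicit Arguments. Unset Strict Implicit. Unset Printing Implicit Defensive.
Import GRing.Theory.
Local Open Scope ring_scope.

Definition additive_fun (U V : zmodType) (f : U -> V) :=
  forall a b, f (a + b) = f a + f b.

Definition rng (B A : pzRingType) (i : B -> A) (a : A) : Prop := exists b, a = i b.

(* Biadditive maps A x A -> G which are balanced over the subring S of A,
   i.e. maps inducing additive maps out of A (x)_S A. *)
Definition balanced2 (A : pzRingType) (S : A -> Prop) (G : zmodType)
    (h : A -> A -> G) : Prop :=
  [/\ forall x y z, h (x + y) z = h x z + h y z,
      forall x y z, h x (y + z) = h x y + h x z &
      forall x b y, S b -> h (x * b) y = h x (b * y)].

(* (T, t) is a tensor product A (x)_S A (t x y = x (x) y): universal property. *)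
Definition is_tensor2 (A : pzRingType) (S : A -> Prop) (T : zmodType)
    (t : A -> A -> T) : Prop :=
  balanced2 S t /\
  forall (G : zmodType) (h : A -> A -> G), balanced2 S h ->
    exists phi : T -> G,
      [/\ additive_fun phi,
          forall x y, phi (t x y) = h x y &
          forall phi' : T -> G, additive_fun phi' ->
            (forall x y, phi' (t x y) = h x y) -> phi' =1 phi].

(* s lies in T^S, i.e. b s = s b for all b in S, where the left/right actions
   of b on T = A (x)_S A are the additive maps x(x)y |-> bx(x)y, x(x)y |-> x(x)yb. *)
Definition tcentral (A : pzRingType) (S : A -> Prop) (T : zmodType)
    (t : A -> A -> T) (s : T) : Prop :=
  forall b, S b ->
  forall L R : T -> T, additive_fun L -> additive_fun R ->
    (forall x y, L (t x y) = t (b * x) y) ->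
    (forall x y, R (t x y) = t x (y * b)) -> L s = R s.

(* rho : N -> B belongs to N^* = Hom^r(_B N, _B B) (u^rho written rho u). *)
Definition bdual (B : pzRingType) (N : lmodType B) (rho : N -> B) : Prop :=
  forall b u v, rho (b *: u + v) = b * rho u + rho v.

(* Triadditive B-balanced maps N^* x A x N -> G (N^* is a right B-module via
   u^(rho b) = u^rho b, A is a B-B-bimodule through i). *)
Definition balanced3 (B A : pzRingType) (i : B -> A) (N : lmodType B)
    (G : zmodType) (h : (N -> B) -> A -> N -> G) : Prop :=
  [/\ forall r s x u, bdual r -> bdual s ->
        h (fun v => r v + s v) x u = h r x u + h s x u,
      forall r x y u, bdual r -> h r (x + y) u = h r x u + h r y u,
      forall r x u v, bdual r -> h r x (u + v) = h r x u + h r x v,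
      forall r b x u, bdual r -> h (fun v => r v * b) x u = h r (i b * x) u &
      forall r x b u, bdual r -> h r (x * i b) u = h r x (b *: u)].

(* (T, t) is a tensor product N^* (x)_B A (x)_B N, t r x u = r (x) x (x) u. *)
Definition is_tensor3 (B A : pzRingType) (i : B -> A) (N : lmodType B)
    (T : zmodType) (t : (N -> B) -> A -> N -> T) : Prop :=
  balanced3 i t /\
  forall (G : zmodType) (h : (N -> B) -> A -> N -> G), balanced3 i h ->
    exists phi : T -> G,
      [/\ additive_fun phi,
          forall r x u, bdual r -> phi (t r x u) = h r x u &
          forall phi' : T -> G, additive_fun phi' ->
            (forall r x u, bdual r -> phi' (t r x u) = h r x u) -> phi' =1 phi].

(* A' is the ring N^* (x)_B A (x)_B N with the multiplication
   (r (x) x (x) u)(s (x) y (x) v) = r (x) x u^s y (x) v and identity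
   sum_j f_j (x) 1 (x) m_j. *)
Definition tensor_ring (B A : pzRingType) (i : B -> A) (N : lmodType B)
    (A' : pzRingType) (tau : (N -> B) -> A -> N -> A')
    (J : nat) (f : 'I_J -> N -> B) (m : 'I_J -> N) : Prop :=
  [/\ is_tensor3 i tau,
      forall r x u s y v, bdual r -> bdual s ->
        tau r x u * tau s y v = tau r (x * i (s u) * y) v &
      1 = \sum_(j < J) tau (f j) 1 (m j)].

(* B' = image of N^* (x)_B B (x)_B N in A'. *)
Definition Bprime (B A : pzRingType) (i : B -> A) (N : lmodType B)
    (A' : pzRingType) (tau : (N -> B) -> A -> N -> A') (a : A') : Prop :=
  exists (k : nat) (r : 'I_k -> N -> B) (b : 'I_k -> B) (u : 'I_k -> N),
    (forall q, bdual (r q)) /\ a = \sum_(q < k) tau (r q) (i (b q)) (u q).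

(* Main.v *)
Require Import Defs.
From HB Require Import structures.
From mathcomp Require Import all_boot all_order all_algebra.
From Stdlib Require Import Classical ClassicalEpsilon.
Import GRing.Theory.
Local Open Scope ring_scope.
Set Implicit Arguments. Unset Strict Implicit.

Section AddF.
Variables (U V W : zmodType).

Lemma addf0 (h : U -> V) : additive_fun h -> h 0 = 0.
Proof.
move=> H; have E := H 0 0; rewrite addr0 in E.
by apply: (addrI (h 0)); rewrite -E addr0.
Qed.

Lemma addf_sum (h : U -> V) (I : Type) (r : seq I) (P : pred I) (F : I -> U) :
  additive_fun h -> h (\sum_(j <- r | P j) F j) = \sum_(j <- r | P j) h (F j).
Proof. by move=> H; apply: (big_morph h H (addf0 H)). Qed.

Lemma addf_comp (h : V -> W) (k : U -> V) :
  additive_fun h -> additive_fun k -> additive_fun (fun x => h (k x)).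
Proof. by move=> Hh Hk a b; rewrite Hk Hh. Qed.

Lemma addf_bsum (I : Type) (r : seq I) (P : pred I) (F : I -> U -> V) :
  (forall j, additive_fun (F j)) ->
  additive_fun (fun x => \sum_(j <- r | P j) F j x).
Proof. by move=> H a b; rewrite -big_split /=; apply: eq_bigr => j _; apply: H. Qed.

End AddF.

Section BD.
Variables (B : pzRingType) (N : lmodType B) (r : N -> B).
Hypothesis hr : bdual r.

Lemma bdualD u v : r (u + v) = r u + r v.
Proof. by have := hr 1 u v; rewrite scale1r mul1r. Qed.

Lemma bdual_add : additive_fun r.
Proof. exact: bdualD. Qed.

Lemma bdual0 : r 0 = 0.
Proof. exact: addf0 bdual_add. Qed.

Lemma bdualZ b u : r (b *: u) = b * r u.
Proof. by have := hr b u 0; rewrite addr0 bdual0 addr0. Qed.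

Lemma bdual_sum (I : Type) (s : seq I) (P : pred I) (F : I -> N) :
  r (\sum_(j <- s | P j) F j) = \sum_(j <- s | P j) r (F j).
Proof. exact: addf_sum bdual_add. Qed.

Lemma bdual_scal c : bdual (fun v => r v * c).
Proof. by move=> b u v; rewrite hr mulrDl mulrA. Qed.
End BD.

Section Gen2.
Variables (A : pzRingType) (S : A -> Prop) (T : zmodType) (t : A -> A -> T).

Lemma tl2_ex (G : zmodType) (h : A -> A -> G) : exists phi : T -> G,
  is_tensor2 S t -> balanced2 S h -> additive_fun phi /\ forall x y, phi (t x y) = h x y.
Proof.
case: (classic (is_tensor2 S t /\ balanced2 S h)) => [[[_ U] hb]|nH].
  by have [phi [a e _]] := U G h hb; exists phi.
by exists (fun _ => 0) => H1 H2; case: nH.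
Qed.

Definition tl2 (G : zmodType) (h : A -> A -> G) : T -> G :=
  proj1_sig (constructive_indefinite_description _ (tl2_ex h)).

Hypothesis ht : is_tensor2 S t.

Lemma tl2P (G : zmodType) (h : A -> A -> G) : balanced2 S h ->
  additive_fun (tl2 h) /\ forall x y, tl2 h (t x y) = h x y.
Proof. by rewrite /tl2; case: constructive_indefinite_description => phi H /= hb; apply: H. Qed.

Lemma t_addl x y z : t (x + y) z = t x z + t y z.
Proof. by case: ht => [[]]. Qed.
Lemma t_addr x y z : t x (y + z) = t x y + t x z.
Proof. by case: ht => [[]]. Qed.
Lemma t_bal x b y : S b -> t (x * b) y = t x (b * y).
Proof. by move=> Sb; case: ht => [[_ _ H] _]; apply: H. Qed.
Lemma t_suml (I : Type) (r : seq I) (P : pred I) (F : I -> A) y :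
  t (\sum_(j <- r | P j) F j) y = \sum_(j <- r | P j) t (F j) y.
Proof. by apply: (addf_sum (h := fun x => t x y)) => a b; apply: t_addl. Qed.
Lemma t_sumr (I : Type) (r : seq I) (P : pred I) (F : I -> A) x :
  t x (\sum_(j <- r | P j) F j) = \sum_(j <- r | P j) t x (F j).
Proof. by apply: (addf_sum (h := fun y => t x y)) => a b; apply: t_addr. Qed.

Lemma t2_ext (G : zmodType) (F1 F2 : T -> G) : additive_fun F1 -> additive_fun F2 ->
  (forall x y, F1 (t x y) = F2 (t x y)) -> F1 =1 F2.
Proof.
move=> a1 a2 E; case: ht => [[tD1 tD2 tB] U].
have hb : balanced2 S (fun x y => F1 (t x y)).
  by split=> [x y z|x y z|x b y Sb]; rewrite ?tD1 ?tD2 ?a1 ?tB.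
have [phi [_ _ uq]] := U G _ hb.
have e1 := uq F1 a1 (fun _ _ => erefl).
have e2 := uq F2 a2 (fun x y => esym (E x y)).
by move=> s; rewrite e1 e2.
Qed.

Definition Lmul (a : A) : T -> T := tl2 (fun x y => t (a * x) y).
Definition Rmul (a : A) : T -> T := tl2 (fun x y => t x (y * a)).

Lemma Lmul_bal a : balanced2 S (fun x y => t (a * x) y).
Proof. by split=> [x y z|x y z|x b y Sb]; rewrite ?mulrDr ?t_addl ?t_addr // mulrA t_bal. Qed.
Lemma Rmul_bal a : balanced2 S (fun x y => t x (y * a)).
Proof. by split=> [x y z|x y z|x b y Sb]; rewrite ?mulrDl ?t_addl ?t_addr // t_bal // mulrA. Qed.

Lemma Lmul_add a : additive_fun (Lmul a).
Proof. by case: (tl2P (Lmul_bal a)). Qed.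
Lemma Lmul_t a x y : Lmul a (t x y) = t (a * x) y.
Proof. by case: (tl2P (Lmul_bal a)) => _ H; exact: H. Qed.
Lemma Rmul_add a : additive_fun (Rmul a).
Proof. by case: (tl2P (Rmul_bal a)). Qed.
Lemma Rmul_t a x y : Rmul a (t x y) = t x (y * a).
Proof. by case: (tl2P (Rmul_bal a)) => _ H; exact: H. Qed.

Lemma Lmul_sum (I : Type) (r : seq I) (P : pred I) (a : I -> A) s :
  \sum_(j <- r | P j) Lmul (a j) s = Lmul (\sum_(j <- r | P j) a j) s.
Proof.
apply: (t2_ext (F1 := fun s => \sum_(j <- r | P j) Lmul (a j) s) (F2 := Lmul (\sum_(j <- r | P j) a j))).
  by apply: addf_bsum => j; apply: Lmul_add.
  exact: Lmul_add.
by move=> x y; rewrite Lmul_t mulr_suml t_suml; apply: eq_bigr => j _; rewrite Lmul_t.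
Qed.
Lemma Rmul_sum (I : Type) (r : seq I) (P : pred I) (a : I -> A) s :
  \sum_(j <- r | P j) Rmul (a j) s = Rmul (\sum_(j <- r | P j) a j) s.
Proof.
apply: (t2_ext (F1 := fun s => \sum_(j <- r | P j) Rmul (a j) s) (F2 := Rmul (\sum_(j <- r | P j) a j))).
  by apply: addf_bsum => j; apply: Rmul_add.
  exact: Rmul_add.
by move=> x y; rewrite Rmul_t mulr_sumr t_sumr; apply: eq_bigr => j _; rewrite Rmul_t.
Qed.
Lemma Lmul1 s : Lmul 1 s = s.
Proof.
by apply: (t2_ext (F2 := id)) s => //; [exact: Lmul_add | move=> x y; rewrite Lmul_t mul1r].
Qed.
Lemma Rmul1 s : Rmul 1 s = s.
Proof.
by apply: (t2_ext (F2 := id)) s => //; [exact: Rmul_add | move=> x y; rewrite Rmul_t mulr1].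
Qed.
Lemma LRcomm a b s : Lmul a (Rmul b s) = Rmul b (Lmul a s).
Proof.
apply: (t2_ext (F1 := fun s => Lmul a (Rmul b s)) (F2 := fun s => Rmul b (Lmul a s))).
- exact: addf_comp (Lmul_add a) (Rmul_add b).
- exact: addf_comp (Rmul_add b) (Lmul_add a).
- by move=> x y /=; rewrite Rmul_t Lmul_t Lmul_t Rmul_t.
Qed.
Lemma RRmul a b s : Rmul b (Rmul a s) = Rmul (a * b) s.
Proof.
apply: (t2_ext (F1 := fun s => Rmul b (Rmul a s)) (F2 := Rmul (a * b))).
- exact: addf_comp (Rmul_add b) (Rmul_add a).
- exact: Rmul_add.
- by move=> x y /=; rewrite !Rmul_t mulrA.
Qed.
Lemma Lmul_eq L a : additive_fun L -> (forall x y, L (t x y) = t (a * x) y) -> L =1 Lmul a.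
Proof. move=> aL eL; apply: (t2_ext (F1 := L) (F2 := Lmul a)) => //; [exact: Lmul_add | by move=> x y; rewrite eL Lmul_t]. Qed.
Lemma Rmul_eq R a : additive_fun R -> (forall x y, R (t x y) = t x (y * a)) -> R =1 Rmul a.
Proof. move=> aR eR; apply: (t2_ext (F1 := R) (F2 := Rmul a)) => //; [exact: Rmul_add | by move=> x y; rewrite eR Rmul_t]. Qed.
Lemma central_LR s a : tcentral S t s -> S a -> Lmul a s = Rmul a s.
Proof.
move=> Hs Sa; exact: (Hs a Sa (Lmul a) (Rmul a) (Lmul_add a) (Rmul_add a) (Lmul_t a) (Rmul_t a)).
Qed.
End Gen2.

Section Gen3.
Variables (B A : pzRingType) (i : B -> A) (N : lmodType B) (T : zmodType)
  (tau : (N -> B) -> A -> N -> T).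

Lemma tl3_ex (G : zmodType) (h : (N -> B) -> A -> N -> G) : exists phi : T -> G,
  is_tensor3 i tau -> balanced3 i h ->
  additive_fun phi /\ forall r x u, bdual r -> phi (tau r x u) = h r x u.
Proof.
case: (classic (is_tensor3 i tau /\ balanced3 i h)) => [[[_ U] hb]|nH].
  by have [phi [a e _]] := U G h hb; exists phi.
by exists (fun _ => 0) => H1 H2; case: nH.
Qed.

Definition tl3 (G : zmodType) (h : (N -> B) -> A -> N -> G) : T -> G :=
  proj1_sig (constructive_indefinite_description _ (tl3_ex h)).

Hypothesis ht : is_tensor3 i tau.

Lemma tl3P (G : zmodType) (h : (N -> B) -> A -> N -> G) : balanced3 i h ->
  additive_fun (tl3 h) /\ forall r x u, bdual r -> tl3 h (tau r x u) = h r x u.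
Proof. by rewrite /tl3; case: constructive_indefinite_description => phi H /= hb; apply: H. Qed.

Lemma tau_addx r x y u : bdual r -> tau r (x + y) u = tau r x u + tau r y u.
Proof. by case: ht => [[_ H _ _ _] _] /H. Qed.
Lemma tau_addu r x u v : bdual r -> tau r x (u + v) = tau r x u + tau r x v.
Proof. by case: ht => [[_ _ H _ _] _] /H. Qed.
Lemma tau_bal5 r x b u : bdual r -> tau r (x * i b) u = tau r x (b *: u).
Proof. by case: ht => [[_ _ _ _ H] _] /H. Qed.
Lemma tau_sumx r (I : Type) (s : seq I) (P : pred I) (F : I -> A) u : bdual r ->
  tau r (\sum_(j <- s | P j) F j) u = \sum_(j <- s | P j) tau r (F j) u.
Proof. by move=> hr; apply: (addf_sum (h := fun x => tau r x u)) => a b; apply: tau_addx. Qed.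

Lemma t3_ext (G : zmodType) (F1 F2 : T -> G) : additive_fun F1 -> additive_fun F2 ->
  (forall r x u, bdual r -> F1 (tau r x u) = F2 (tau r x u)) -> F1 =1 F2.
Proof.
move=> a1 a2 E; case: ht => [[tD1 tD2 tD3 tB4 tB5] U].
have hb : balanced3 i (fun r x u => F1 (tau r x u)).
  split=> [r s x u hr hs|r x y u hr|r x u v hr|r b x u hr|r x b u hr].
  - by rewrite tD1 // a1.
  - by rewrite tD2 // a1.
  - by rewrite tD3 // a1.
  - by rewrite tB4.
  - by rewrite tB5.
have [phi [_ _ uq]] := U G _ hb.
have e1 := uq F1 a1 (fun _ _ _ _ => erefl).
have e2 := uq F2 a2 (fun r x u hr => esym (E r x u hr)).
by move=> s; rewrite e1 e2.
Qed.
End Gen3.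

Lemma addfS (U V : zmodType) (h : U -> V) : additive_fun h ->
  forall (I : Type) (r : seq I) (P : pred I) (F : I -> U),
  h (\sum_(j <- r | P j) F j) = \sum_(j <- r | P j) h (F j).
Proof. by move=> H I r P F; apply: addf_sum. Qed.

Section Main.
Variables (B A : pzRingType) (i : {rmorphism B -> A}) (N : lmodType B)
    (J K : nat) (f : 'I_J -> N -> B) (m : 'I_J -> N)
    (g : 'I_K -> N -> B) (n : 'I_K -> N)
    (A' : pzRingType) (tau : (N -> B) -> A -> N -> A')
    (T : zmodType) (t : A -> A -> T) (T' : zmodType) (t' : A' -> A' -> T')
    (psi : T -> T').
Hypotheses (hf : forall j, bdual (f j)) (hg : forall k, bdual (g k))
  (hfm : forall u : N, \sum_(j < J) f j u *: m j = u)
  (hgn : \sum_(k < K) g k (n k) = 1)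
  (htau : is_tensor3 i tau)
  (hmul : forall r x u s y v, bdual r -> bdual s ->
        tau r x u * tau s y v = tau r (x * i (s u) * y) v)
  (hone : 1 = \sum_(j < J) tau (f j) 1 (m j))
  (ht : is_tensor2 (rng i) t) (ht' : is_tensor2 (Bprime i tau) t')
  (hpa : additive_fun psi)
  (hpsi : forall x y, psi (t x y) =
     \sum_(j < J) \sum_(k < K) t' (tau (f j) x (n k)) (tau (g k) y (m j))).

Local Hint Resolve hf hg : core.

Local Notation Lm := (Lmul (rng i) t).
Local Notation Rm := (Rmul (rng i) t).
Local Notation Lm' := (Lmul (Bprime i tau) t').
Local Notation Rm' := (Rmul (Bprime i tau) t').

Lemma rng_i c : rng i (i c). Proof. by exists c. Qed.
Lemma Bp_gen r c w : bdual r -> Bprime i tau (tau r (i c) w).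
Proof.
by move=> hr; exists 1%N, (fun _ => r), (fun _ => c), (fun _ => w); split => //; rewrite big_ord1.
Qed.
Lemma Bp_gen1 r w : bdual r -> Bprime i tau (tau r 1 w).
Proof. by move=> hr; rewrite -(rmorph1 i); apply: Bp_gen. Qed.

Lemma tb x c y : t (x * i c) y = t x (i c * y).
Proof. exact: (t_bal ht _ _ (rng_i c)). Qed.
Lemma t'b1 a r w b : bdual r -> t' (a * tau r 1 w) b = t' a (tau r 1 w * b).
Proof. by move=> hr; apply: (t_bal ht'); apply: Bp_gen1. Qed.

Lemma SUMJ s X Y w : bdual s ->
  \sum_(j < J) t (X * i (f j w)) (i (s (m j)) * Y) = t X (i (s w) * Y).
Proof.
move=> hs.
rewrite (eq_bigr (fun j => t X (i (f j w * s (m j)) * Y))) => [|j _]; last first.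
  by rewrite tb mulrA rmorphM.
rewrite -(t_sumr ht) -mulr_suml -rmorph_sum.
congr (t X (i _ * Y)).
by rewrite -[in RHS](hfm w) bdual_sum //; apply: eq_bigr => j _; rewrite bdualZ.
Qed.

Lemma SPLIT al X u : bdual al -> tau al X u = \sum_(k < K) tau al X (n k) * tau (g k) 1 u.
Proof.
move=> ha; rewrite (eq_bigr (fun k => tau al (X * i (g k (n k))) u)) => [|k _]; last first.
  by rewrite hmul // mulr1.
by rewrite -(tau_sumx htau) // -mulr_sumr -rmorph_sum hgn rmorph1 mulr1.
Qed.

Lemma LEFT1 s Z u : bdual s -> tau s Z u = \sum_(l < J) tau (f l) (i (s (m l)) * Z) u.
Proof.
move=> hs; rewrite -[LHS]mul1r {1}hone mulr_suml; apply: eq_bigr => l _.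
by rewrite hmul // mul1r.
Qed.

Lemma RIGHT1 r Z w : bdual r -> tau r Z w = \sum_(l < J) tau r (Z * i (f l w)) (m l).
Proof.
move=> hr; rewrite -[LHS]mulr1 {1}hone mulr_sumr; apply: eq_bigr => l _.
by rewrite hmul // mulr1.
Qed.

Lemma MID al s X Y u w : bdual al -> bdual s ->
  t' (tau al X u) (tau s Y w) =
  \sum_(k < K) t' (tau al X (n k)) (tau (g k) (i (s u) * Y) w).
Proof.
move=> ha hs; rewrite (SPLIT _ _ ha) (t_suml ht'); apply: eq_bigr => k _.
by rewrite t'b1 // hmul // mul1r.
Qed.


Definition lam (nn : N) (gg : N -> B) : A' -> A :=
  tl3 i tau (fun r x u => i (r nn) * x * i (gg u)).

Lemma lam_bal (nn : N) (gg : N -> B) : bdual gg -> balanced3 i (fun r x u => i (r nn) * x * i (gg u)).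
Proof.
move=> hgg; split.
- by move=> r s x u _ _ /=; rewrite rmorphD !mulrDl.
- by move=> r x y u _; rewrite mulrDr mulrDl.
- by move=> r x u v _; rewrite bdualD // rmorphD mulrDr.
- by move=> r b x u _ /=; rewrite rmorphM !mulrA.
- by move=> r x b u _; rewrite bdualZ // rmorphM !mulrA.
Qed.

Lemma lam_add (nn : N) (gg : N -> B) : bdual gg -> additive_fun (lam nn gg).
Proof. by move=> hgg; case: (tl3P htau (lam_bal nn hgg)). Qed.
Lemma lam_tau (nn : N) (gg r : N -> B) x u : bdual gg -> bdual r ->
  lam nn gg (tau r x u) = i (r nn) * x * i (gg u).
Proof. by move=> hgg hr; case: (tl3P htau (lam_bal nn hgg)) => _ H; exact: H. Qed.

Definition hPhi (nn : N) (gg : N -> B) (a1 a2 : A') : T :=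
  \sum_(j < J) t (lam nn (f j) a1) (lam (m j) gg a2).

Lemma hPhi_gen (nn : N) (gg r s : N -> B) x u y v : bdual gg -> bdual r -> bdual s ->
  hPhi nn gg (tau r x u) (tau s y v) = t (i (r nn) * x) (i (s u) * y * i (gg v)).
Proof.
move=> hgg hr hs; rewrite /hPhi.
rewrite (eq_bigr (fun j => t (i (r nn) * x * i (f j u)) (i (s (m j)) * (y * i (gg v))))) => [|j _].
  by rewrite SUMJ // mulrA.
by rewrite !lam_tau // mulrA.
Qed.

Lemma hPhi_addl (nn : N) (gg : N -> B) a b c : bdual gg -> hPhi nn gg (a + b) c = hPhi nn gg a c + hPhi nn gg b c.
Proof.
by move=> hgg; rewrite /hPhi -big_split; apply: eq_bigr => j _; rewrite (lam_add _ (hf j)) (t_addl ht).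
Qed.
Lemma hPhi_addr (nn : N) (gg : N -> B) a b c : bdual gg -> hPhi nn gg c (a + b) = hPhi nn gg c a + hPhi nn gg c b.
Proof.
by move=> hgg; rewrite /hPhi -big_split; apply: eq_bigr => j _; rewrite (lam_add _ hgg) (t_addr ht).
Qed.
Lemma hPhi_suml (nn : N) (gg : N -> B) (I : Type) (r : seq I) (P : pred I) (F : I -> A') a2 : bdual gg ->
  hPhi nn gg (\sum_(q <- r | P q) F q) a2 = \sum_(q <- r | P q) hPhi nn gg (F q) a2.
Proof. by move=> hgg; apply: (addf_sum (h := fun a => hPhi nn gg a a2)) => a b; apply: hPhi_addl. Qed.
Lemma hPhi_sumr (nn : N) (gg : N -> B) (I : Type) (r : seq I) (P : pred I) (F : I -> A') a1 : bdual gg ->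
  hPhi nn gg a1 (\sum_(q <- r | P q) F q) = \sum_(q <- r | P q) hPhi nn gg a1 (F q).
Proof. by move=> hgg; apply: (addf_sum (h := fun a => hPhi nn gg a1 a)) => a b; apply: hPhi_addr. Qed.

Lemma hPhi_gen_bal (nn : N) (gg sg : N -> B) c w a1 a2 : bdual gg -> bdual sg ->
  hPhi nn gg (a1 * tau sg (i c) w) a2 = hPhi nn gg a1 (tau sg (i c) w * a2).
Proof.
move=> hgg hs; set be := tau sg (i c) w.
move: a1; apply: (t3_ext htau (F1 := fun a1 => hPhi nn gg (a1 * be) a2)
                               (F2 := fun a1 => hPhi nn gg a1 (be * a2))).
- by move=> a b /=; rewrite mulrDl hPhi_addl.
- by move=> a b /=; rewrite hPhi_addl.
move=> r x u hr /=; move: a2.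
apply: (t3_ext htau (F1 := fun a2 => hPhi nn gg (tau r x u * be) a2)
                    (F2 := fun a2 => hPhi nn gg (tau r x u) (be * a2))).
- by move=> a b /=; rewrite hPhi_addr.
- by move=> a b /=; rewrite mulrDr hPhi_addr.
move=> s y v hs' /=.
rewrite /be !hmul // !hPhi_gen // !mulrA tb tb.
by congr (t _ _); rewrite !mulrA.
Qed.

Lemma hPhi_bal (nn : N) (gg : N -> B) : bdual gg -> balanced2 (Bprime i tau) (hPhi nn gg).
Proof.
move=> hgg; split => [x y z|x y z|a1 b a2].
- exact: hPhi_addl.
- exact: hPhi_addr.
case=> k [r [c [w [hr ->]]]].
rewrite mulr_sumr mulr_suml hPhi_suml // hPhi_sumr //.
by apply: eq_bigr => q _; apply: hPhi_gen_bal.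
Qed.

Definition Phi (nn : N) (gg : N -> B) : T' -> T := tl2 (Bprime i tau) t' (hPhi nn gg).

Lemma Phi_add (nn : N) (gg : N -> B) : bdual gg -> additive_fun (Phi nn gg).
Proof. by move=> hgg; case: (tl2P ht' (hPhi_bal nn hgg)). Qed.
Lemma Phi_t (nn : N) (gg : N -> B) a1 a2 : bdual gg -> Phi nn gg (t' a1 a2) = hPhi nn gg a1 a2.
Proof. by move=> hgg; case: (tl2P ht' (hPhi_bal nn hgg)) => _ H; exact: H. Qed.
Lemma Phi_gen (nn : N) (gg r s : N -> B) x u y v : bdual gg -> bdual r -> bdual s ->
  Phi nn gg (t' (tau r x u) (tau s y v)) = t (i (r nn) * x) (i (s u) * y * i (gg v)).
Proof. by move=> hgg hr hs; rewrite Phi_t // hPhi_gen. Qed.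

Definition hPsi (al : N -> B) (w : N) (x y : A) : T' :=
  \sum_(k < K) t' (tau al x (n k)) (tau (g k) y w).

Lemma hPsi_bal (al : N -> B) (w : N) : bdual al -> balanced2 (rng i) (hPsi al w).
Proof.
move=> ha; split => [x y z|x y z|x b y].
- by rewrite /hPsi -big_split; apply: eq_bigr => k _; rewrite (tau_addx htau) // (t_addl ht').
- by rewrite /hPsi -big_split; apply: eq_bigr => k _; rewrite (tau_addx htau) // (t_addr ht').
case=> c ->; rewrite /hPsi.
transitivity (\sum_(k < K) \sum_(k2 < K)
   t' (tau al x (n k2)) (tau (g k2) (i (g k (c *: n k)) * y) w)).
  by apply: eq_bigr => k _; rewrite (tau_bal5 htau) // MID.
rewrite exchange_big; apply: eq_bigr => k2 _.
rewrite -(t_sumr ht') -(tau_sumx htau) // -mulr_suml -rmorph_sum.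
congr (t' _ (tau _ (i _ * y) w)).
rewrite (eq_bigr (fun k => c * g k (n k))) => [|k _]; last by rewrite bdualZ.
by rewrite -mulr_sumr hgn mulr1.
Qed.

Definition Psi (al : N -> B) (w : N) : T -> T' := tl2 (rng i) t (hPsi al w).

Lemma Psi_add (al : N -> B) (w : N) : bdual al -> additive_fun (Psi al w).
Proof. by move=> ha; case: (tl2P ht (hPsi_bal w ha)). Qed.
Lemma Psi_t (al : N -> B) (w : N) x y : bdual al ->
  Psi al w (t x y) = \sum_(k < K) t' (tau al x (n k)) (tau (g k) y w).
Proof. by move=> ha; case: (tl2P ht (hPsi_bal w ha)) => _ H; exact: H. Qed.

Lemma psi_Psi s : psi s = \sum_(j < J) Psi (f j) (m j) s.
Proof.
apply: (t2_ext ht (F1 := psi) (F2 := fun s => \sum_(j < J) Psi (f j) (m j) s)) => //.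
  by apply: addf_bsum => j; apply: Psi_add.
by move=> x y /=; rewrite hpsi; apply: eq_bigr => j _; rewrite Psi_t.
Qed.

Lemma T'ext (G : zmodType) (F1 F2 : T' -> G) : additive_fun F1 -> additive_fun F2 ->
  (forall (r s : N -> B) x u y v, bdual r -> bdual s ->
     F1 (t' (tau r x u) (tau s y v)) = F2 (t' (tau r x u) (tau s y v))) -> F1 =1 F2.
Proof.
move=> a1 a2 E; apply: (t2_ext ht' a1 a2) => a b; move: a.
apply: (t3_ext htau (F1 := fun a => F1 (t' a b)) (F2 := fun a => F2 (t' a b))).
- by move=> ? ? /=; rewrite (t_addl ht') a1.
- by move=> ? ? /=; rewrite (t_addl ht') a2.
move=> r x u hr /=; move: b.
apply: (t3_ext htau (F1 := fun b => F1 (t' (tau r x u) b)) (F2 := fun b => F2 (t' (tau r x u) b))).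
- by move=> ? ? /=; rewrite (t_addr ht') a1.
- by move=> ? ? /=; rewrite (t_addr ht') a2.
by move=> s y v hs /=; apply: E.
Qed.

Definition Phi0 (s' : T') : T := \sum_(k < K) Phi (n k) (g k) s'.

Lemma PhiPsi (nn : N) (gg al : N -> B) (w : N) s : bdual gg -> bdual al ->
  Phi nn gg (Psi al w s) = Lm (i (al nn)) (Rm (i (gg w)) s).
Proof.
move=> hgg ha.
apply: (t2_ext ht (F1 := fun s => Phi nn gg (Psi al w s))
                  (F2 := fun s => Lm (i (al nn)) (Rm (i (gg w)) s))).
- exact: addf_comp (Phi_add nn hgg) (Psi_add w ha).
- exact: addf_comp (Lmul_add ht _) (Rmul_add ht _).
move=> x y /=; rewrite Psi_t // (addfS (Phi_add nn hgg)).
rewrite (eq_bigr (fun k => t (i (al nn) * x) (i (g k (n k)) * y * i (gg w)))) => [|k _]; last first.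
  by rewrite Phi_gen.
rewrite -(t_sumr ht) -!mulr_suml -rmorph_sum hgn rmorph1 mul1r.
by rewrite (Rmul_t ht) (Lmul_t ht).
Qed.

Lemma fg_sum (gg : N -> B) (w : N) : bdual gg -> \sum_(j < J) f j w * gg (m j) = gg w.
Proof.
by move=> hgg; rewrite -[in RHS](hfm w) bdual_sum //; apply: eq_bigr => j _; rewrite bdualZ.
Qed.

Lemma Phi0_psi s : tcentral (rng i) t s -> Phi0 (psi s) = s.
Proof.
move=> Hs; rewrite /Phi0.
transitivity (\sum_(k < K) \sum_(j < J) Rm (i (f j (n k)) * i (g k (m j))) s).
  apply: eq_bigr => k _; rewrite psi_Psi (addfS (Phi_add _ (hg k))).
  apply: eq_bigr => j _; rewrite PhiPsi // LRcomm // (central_LR ht Hs (rng_i _)).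
  by rewrite RRmul.
transitivity (\sum_(k < K) Rm (i (g k (n k))) s).
  apply: eq_bigr => k _; rewrite (Rmul_sum ht); congr (Rm _ s).
  by rewrite -fg_sum // rmorph_sum; apply: eq_bigr => j _; rewrite rmorphM.
by rewrite (Rmul_sum ht) -rmorph_sum hgn rmorph1 (Rmul1 ht).
Qed.

Lemma psiPhi (nn : N) (gg : N -> B) s' : bdual gg ->
  psi (Phi nn gg s') = \sum_(j < J) Lm' (tau (f j) 1 nn) (Rm' (tau gg 1 (m j)) s').
Proof.
move=> hgg.
apply: (T'ext (F1 := fun s' => psi (Phi nn gg s'))
  (F2 := fun s' => \sum_(j < J) Lm' (tau (f j) 1 nn) (Rm' (tau gg 1 (m j)) s'))).
- exact: addf_comp hpa (Phi_add nn hgg).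
- by apply: addf_bsum => j; apply: addf_comp (Lmul_add ht' _) (Rmul_add ht' _).
move=> r s x u y v hr hs /=.
rewrite Phi_gen // hpsi; apply: eq_bigr => j _.
rewrite (Rmul_t ht') (Lmul_t ht') !hmul // MID //; apply: eq_bigr => k _.
by rewrite mul1r mulr1 !mulrA.
Qed.

Lemma psi_Phi0 s' : tcentral (Bprime i tau) t' s' -> psi (Phi0 s') = s'.
Proof.
move=> Hs; rewrite /Phi0 (addfS hpa).
transitivity (\sum_(k < K) \sum_(j < J) Rm' (tau (f j) 1 (n k) * tau (g k) 1 (m j)) s').
  apply: eq_bigr => k _; rewrite psiPhi //; apply: eq_bigr => j _.
  rewrite LRcomm // (central_LR ht' Hs (Bp_gen1 _ (hf j))).
  by rewrite RRmul.
rewrite exchange_big /=.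
rewrite (eq_bigr (fun j => Rm' (tau (f j) 1 (m j)) s')) => [|j _].
  by rewrite (Rmul_sum ht') -hone (Rmul1 ht').
rewrite (Rmul_sum ht'); congr (Rm' _ s').
rewrite (eq_bigr (fun k => tau (f j) (i (g k (n k))) (m j))) => [|k _]; last first.
  by rewrite hmul // mul1r mulr1.
by rewrite -(tau_sumx htau) // -rmorph_sum hgn rmorph1.
Qed.

Lemma PhiL c (nn : N) (gg : N -> B) s' : bdual gg ->
  Lm (i c) (Phi nn gg s') = Phi (c *: nn) gg s'.
Proof.
move=> hgg.
apply: (T'ext (F1 := fun s' => Lm (i c) (Phi nn gg s')) (F2 := Phi (c *: nn) gg)).
- exact: addf_comp (Lmul_add ht _) (Phi_add nn hgg).
- exact: Phi_add.
move=> r s x u y v hr hs /=.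
by rewrite !Phi_gen // (Lmul_t ht) bdualZ // rmorphM mulrA.
Qed.

Lemma PhiLm' (nn : N) (gg ga : N -> B) (w : N) s' : bdual gg -> bdual ga ->
  Phi nn gg (Lm' (tau ga 1 w) s') = Lm (i (ga nn)) (Phi w gg s').
Proof.
move=> hgg hga.
apply: (T'ext (F1 := fun s' => Phi nn gg (Lm' (tau ga 1 w) s'))
              (F2 := fun s' => Lm (i (ga nn)) (Phi w gg s'))).
- exact: addf_comp (Phi_add nn hgg) (Lmul_add ht' _).
- exact: addf_comp (Lmul_add ht _) (Phi_add w hgg).
move=> r s x u y v hr hs /=.
by rewrite (Lmul_t ht') hmul // !Phi_gen // (Lmul_t ht) mul1r.
Qed.

Lemma PhiRm' (nn : N) (gg ga : N -> B) (w : N) s' : bdual gg -> bdual ga ->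
  Phi nn gg (Rm' (tau ga 1 w) s') = Rm (i (gg w)) (Phi nn ga s').
Proof.
move=> hgg hga.
apply: (T'ext (F1 := fun s' => Phi nn gg (Rm' (tau ga 1 w) s'))
              (F2 := fun s' => Rm (i (gg w)) (Phi nn ga s'))).
- exact: addf_comp (Phi_add nn hgg) (Rmul_add ht' _).
- exact: addf_comp (Rmul_add ht _) (Phi_add nn hga).
move=> r s x u y v hr hs /=.
by rewrite (Rmul_t ht') hmul // !Phi_gen // (Rmul_t ht) mulr1 !mulrA.
Qed.

Lemma chain (w : N) (gg : N -> B) s' : tcentral (Bprime i tau) t' s' -> bdual gg ->
  Phi w gg s' = \sum_(k < K) Rm (i (gg w)) (Phi (n k) (g k) s').
Proof.
move=> Hs hgg.
rewrite -[LHS](Lmul1 ht) -(rmorph1 i) -hgn rmorph_sum -(Lmul_sum ht).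
apply: eq_bigr => k _.
by rewrite -PhiLm' // (central_LR ht' Hs (Bp_gen1 _ (hg k))) PhiRm'.
Qed.

Lemma Phi0_central s' : tcentral (Bprime i tau) t' s' -> tcentral (rng i) t (Phi0 s').
Proof.
move=> Hs b [c ->] L R aL aR eL eR.
rewrite (Lmul_eq ht aL eL) (Rmul_eq ht aR eR).
rewrite /Phi0 (addfS (Lmul_add ht _)) (addfS (Rmul_add ht _)).
transitivity (\sum_(k' < K) \sum_(k < K) Rm (i (g k' (c *: n k'))) (Phi (n k) (g k) s')).
  by apply: eq_bigr => k' _; rewrite PhiL // chain.
rewrite exchange_big; apply: eq_bigr => k _.
rewrite (Rmul_sum ht) -rmorph_sum; congr (Rm (i _) _).
rewrite (eq_bigr (fun k => c * g k (n k))) => [|k' _]; last by rewrite bdualZ.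
by rewrite -mulr_sumr hgn mulr1.
Qed.

Lemma psi_Lm' (sg : N -> B) c (w : N) s : bdual sg ->
  Lm' (tau sg (i c) w) (psi s) =
  \sum_(j < J) \sum_(l < J) Psi (f l) (m j) (Lm (i (sg (m l) * c * f j w)) s).
Proof.
move=> hs.
apply: (t2_ext ht (F1 := fun s => Lm' (tau sg (i c) w) (psi s))
  (F2 := fun s => \sum_(j < J) \sum_(l < J) Psi (f l) (m j) (Lm (i (sg (m l) * c * f j w)) s))).
- exact: addf_comp (Lmul_add ht' _) hpa.
- apply: addf_bsum => j; apply: addf_bsum => l.
  exact: addf_comp (Psi_add _ (hf l)) (Lmul_add ht _).
move=> x y /=; rewrite hpsi (addfS (Lmul_add ht' _)); apply: eq_bigr => j _.
rewrite (addfS (Lmul_add ht' _)).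
transitivity (\sum_(k < K) \sum_(l < J)
   t' (tau (f l) (i (sg (m l)) * (i c * i (f j w) * x)) (n k)) (tau (g k) y (m j))).
  by apply: eq_bigr => k _; rewrite (Lmul_t ht') hmul // LEFT1 // (t_suml ht').
rewrite exchange_big; apply: eq_bigr => l _.
rewrite (Lmul_t ht) Psi_t //; apply: eq_bigr => k _.
by rewrite !rmorphM !mulrA.
Qed.

Lemma psi_Rm' (sg : N -> B) c (w : N) s : bdual sg ->
  Rm' (tau sg (i c) w) (psi s) =
  \sum_(j < J) \sum_(l < J) Psi (f j) (m l) (Rm (i (sg (m j) * c * f l w)) s).
Proof.
move=> hs.
apply: (t2_ext ht (F1 := fun s => Rm' (tau sg (i c) w) (psi s))
  (F2 := fun s => \sum_(j < J) \sum_(l < J) Psi (f j) (m l) (Rm (i (sg (m j) * c * f l w)) s))).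
- exact: addf_comp (Rmul_add ht' _) hpa.
- apply: addf_bsum => j; apply: addf_bsum => l.
  exact: addf_comp (Psi_add _ (hf j)) (Rmul_add ht _).
move=> x y /=; rewrite hpsi (addfS (Rmul_add ht' _)); apply: eq_bigr => j _.
rewrite (addfS (Rmul_add ht' _)).
transitivity (\sum_(k < K) \sum_(l < J)
   t' (tau (f j) x (n k)) (tau (g k) (y * i (sg (m j)) * i c * i (f l w)) (m l))).
  by apply: eq_bigr => k _; rewrite (Rmul_t ht') hmul // (RIGHT1 (r := g k)) // (t_sumr ht').
rewrite exchange_big; apply: eq_bigr => l _.
rewrite (Rmul_t ht) Psi_t //; apply: eq_bigr => k _.
by rewrite !rmorphM !mulrA.
Qed.

Lemma psi_central s : tcentral (rng i) t s -> tcentral (Bprime i tau) t' (psi s).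
Proof.
move=> Hs be [k [r [b [u [hr ->]]]]] L R aL aR eL eR.
rewrite (Lmul_eq ht' aL eL) (Rmul_eq ht' aR eR) -(Lmul_sum ht') -(Rmul_sum ht').
apply: eq_bigr => q _; rewrite psi_Lm' // psi_Rm' //.
rewrite exchange_big /=; apply: eq_bigr => l _; apply: eq_bigr => j _.
by rewrite (central_LR ht Hs (rng_i _)).
Qed.

Lemma main_result :
  [/\ forall s, tcentral (rng i) t s -> tcentral (Bprime i tau) t' (psi s),
      forall s1 s2, tcentral (rng i) t s1 -> tcentral (rng i) t s2 ->
        psi s1 = psi s2 -> s1 = s2 &
      forall s', tcentral (Bprime i tau) t' s' ->
        exists2 s, tcentral (rng i) t s & psi s = s'].
Proof.
split.
- exact: psi_central.
- by move=> s1 s2 H1 H2 E; rewrite -(Phi0_psi H1) -(Phi0_psi H2) E.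
- move=> s' Hs; exists (Phi0 s'); [exact: Phi0_central | exact: psi_Phi0].
Qed.

End Main.

Theorem lemma2p5 (B A : pzRingType) (i : {rmorphism B -> A}) (N : lmodType B)
    (J K : nat) (f : 'I_J -> N -> B) (m : 'I_J -> N)
    (g : 'I_K -> N -> B) (n : 'I_K -> N)
    (A' : pzRingType) (tau : (N -> B) -> A -> N -> A')
    (T : zmodType) (t : A -> A -> T) (T' : zmodType) (t' : A' -> A' -> T')
    (psi : T -> T') :
  injective i ->
  (forall j, bdual (f j)) -> (forall k, bdual (g k)) ->
  (forall u : N, \sum_(j < J) f j u *: m j = u) ->
  \sum_(k < K) g k (n k) = 1 ->
  tensor_ring i tau f m ->
  is_tensor2 (rng i) t ->
  is_tensor2 (Bprime i tau) t' ->
  additive_fun psi ->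
  (forall x y, psi (t x y) =
     \sum_(j < J) \sum_(k < K) t' (tau (f j) x (n k)) (tau (g k) y (m j))) ->
  [/\ forall s, tcentral (rng i) t s -> tcentral (Bprime i tau) t' (psi s),
      forall s1 s2, tcentral (rng i) t s1 -> tcentral (rng i) t s2 ->
        psi s1 = psi s2 -> s1 = s2 &
      forall s', tcentral (Bprime i tau) t' s' ->
        exists2 s, tcentral (rng i) t s & psi s = s'].
Proof.
move=> _ hf hg hfm hgn [htau hmul hone] ht ht' hpa hpsi.
exact: (main_result hf hg hfm hgn htau hmul hone ht ht' hpa hpsi).
Qed.
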